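(* Let $f$ be a ternary cubic form with $f_{333}\neq0$, $\Delta_{333}\neq0$ and $f_{133}=f_{233}=0$. Then $f$ is completely reducible (a product of three linear forms) if and only if $$f_{113}(4f_{113}f_{223}-f_{123}^2)+3(f_{112}^2-3f_{111}f_{122})f_{333}=0,$$ $$f_{123}(4f_{113}f_{223}-f_{123}^2)+3(f_{112}f_{122}-9f_{111}f_{222})f_{333}=0,$$ $$f_{223}(4f_{113}f_{223}-f_{123}^2)+3(f_{122}^2-3f_{112}f_{222})f_{333}=0.$$
   Context: A ternary cubic form is written $f=\sum_{1\le i\le j\le k\le3}f_{ijk}x_ix_jx_k$ with complex coefficients; $\Delta_{ijk}$ denotes the coefficient of $x_ix_jx_k$ in the Hessian $\Delta=\tfrac12\det(\partial^2f/\partial x_i\partial x_j)$. *)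

(* Defs.v *)
From mathcomp Require Import all_boot all_algebra.
From mathcomp Require Import reals.
From mathcomp.real_closed Require Export complex.
From mathcomp.multinomials Require Export mpoly.
Set Implicit Arguments. Unset Strict Implicit. Unset Printing Implicit Defensive.
Import GRing.Theory Num.Theory.
Local Open Scope ring_scope.

(* Variables x_1, x_2, x_3 are 'X_0, 'X_1, 'X_2 (indices shifted by one). *)

Definition cf3 (C : comRingType) (p : {mpoly C[3]}) (i j k : 'I_3) : C :=
  p@_(U_(i) + U_(j) + U_(k))%MM.

Definition hessian3 (C : fieldType) (f : {mpoly C[3]}) : {mpoly C[3]} :=
  (2%:R : C)^-1 *: \det (\matrix_(i < 3, j < 3) mderiv i (mderiv j f)).

Definition ternary_cubic_form (C : comRingType) (f : {mpoly C[3]}) : Prop :=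
  f \is 3.-homog.

Definition completely_reducible (C : comRingType) (f : {mpoly C[3]}) : Prop :=
  exists l1 l2 l3 : {mpoly C[3]},
    [/\ l1 \is 1.-homog, l2 \is 1.-homog, l3 \is 1.-homog & f = l1 * l2 * l3].

Definition i1 : 'I_3 := @Ordinal 3 0 isT.
Definition i2 : 'I_3 := @Ordinal 3 1 isT.
Definition i3 : 'I_3 := @Ordinal 3 2 isT.

(* Main.v *)
Require Import Defs.
From mathcomp Require Import all_boot all_algebra.
From mathcomp Require Import reals.
From mathcomp.real_closed Require Import complex.
From mathcomp.multinomials Require Import mpoly.
From mathcomp Require Import ring.
Import GRing.Theory Num.Theory.
Local Open Scope ring_scope.

Module Helpers.
Set Implicit Arguments. Unset Strict Implicit.

Lemma mnm3_eq (m1 m2 : 'X_{1..3}) :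
  (m1 == m2) = [&& m1 i1 == m2 i1, m1 i2 == m2 i2 & m1 i3 == m2 i3].
Proof.
apply/eqP/and3P => [->|[/eqP e1 /eqP e2 /eqP e3]]; first by rewrite !eqxx.
apply/mnmP => -[[|[|[|//]]] h].
- by have -> : Ordinal h = i1 by apply/val_inj.
- by have -> : Ordinal h = i2 by apply/val_inj.
- by have -> : Ordinal h = i3 by apply/val_inj.
Qed.

Lemma sum3 (V : nmodType) (F : 'I_3 -> V) : \sum_(j < 3) F j = F i1 + F i2 + F i3.
Proof.
rewrite !big_ord_recr big_ord0 /= add0r.
congr (F _ + F _ + F _); exact/val_inj.
Qed.

Lemma mdeg3E (m : 'X_{1..3}) : mdeg m = (m i1 + m i2 + m i3)%N.
Proof. by rewrite mdegE sum3. Qed.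

Section Gen.
Variable C : comNzRingType.

Definition lin (u : 'I_3 -> C) : {mpoly C[3]} := \sum_(j < 3) u j *: 'X_j.

Definition K3 (u v w : 'I_3 -> C) (m : 'X_{1..3}) : C :=
  \sum_(a < 3) \sum_(b < 3) \sum_(c < 3)
     u a * v b * w c * ((U_(a) + U_(b) + U_(c))%MM == m)%:R.

Lemma linM2 u v : lin u * lin v =
  \sum_(a < 3) \sum_(b < 3) (u a * v b) *: 'X_[(U_(a) + U_(b))%MM].
Proof.
rewrite /lin; rewrite (@mulr_suml {mpoly C[3]}); apply: eq_bigr => a _.
rewrite (@mulr_sumr {mpoly C[3]}); apply: eq_bigr => b _.
by rewrite -!scalerAl -!scalerAr !scalerA !mpolyXD.
Qed.

Lemma linM3 u v w : lin u * lin v * lin w =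
  \sum_(a < 3) \sum_(b < 3) \sum_(c < 3)
     (u a * v b * w c) *: 'X_[(U_(a) + U_(b) + U_(c))%MM].
Proof.
rewrite linM2 (@mulr_suml {mpoly C[3]}); apply: eq_bigr => a _.
rewrite (@mulr_suml {mpoly C[3]}); apply: eq_bigr => b _.
rewrite /lin (@mulr_sumr {mpoly C[3]}); apply: eq_bigr => c _.
by rewrite -!scalerAl -!scalerAr !scalerA !mpolyXD.
Qed.

Lemma coefM3 u v w m : (lin u * lin v * lin w)@_m = K3 u v w m.
Proof.
rewrite linM3 /K3 raddf_sum /=; apply: eq_bigr => a _.
rewrite raddf_sum /=; apply: eq_bigr => b _.
rewrite raddf_sum /=; apply: eq_bigr => c _.
by rewrite mcoeffZ mcoeffX.
Qed.

Lemma coeflin u m : (lin u)@_m = \sum_(a < 3) u a * ((U_(a))%MM == m)%:R.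
Proof.
rewrite /lin raddf_sum /=; apply: eq_bigr => a _.
by rewrite mcoeffZ mcoeffX.
Qed.

Lemma lin_repr (p : {mpoly C[3]}) :
  (forall m, mdeg m != 1%N -> p@_m = 0) -> p = lin (fun k => p@_U_(k)).
Proof.
move=> h; apply/mpolyP => m; rewrite coeflin.
have [/mdeg1P [i /eqP ->]|hm] := boolP (mdeg m == 1%N).
  rewrite (bigD1 i) //= eqxx mulr1 big1 ?addr0 // => j ji.
  case: eqP => [e|]; last by rewrite mulr0.
  have := congr1 (fun m : 'X_{1..3} => m j) e; rewrite !mnm1E eqxx.
  by rewrite eq_sym (negbTE ji).
rewrite h // big1 // => a _; case: eqP => [e|]; last by rewrite mulr0.
by rewrite -e mdeg1 in hm.
Qed.

End Gen.

Section Gen2.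
Variable C : comNzRingType.
Definition cnt (a b c : 'I_3) (i : 'I_3) : nat := ((a == i) + (b == i) + (c == i))%N.

Lemma K3E (u v w : 'I_3 -> C) m : K3 u v w m =
  \sum_(a < 3) \sum_(b < 3) \sum_(c < 3) u a * v b * w c *
    ([&& cnt a b c i1 == m i1, cnt a b c i2 == m i2 & cnt a b c i3 == m i3])%:R.
Proof.
apply: eq_bigr => a _; apply: eq_bigr => b _; apply: eq_bigr => c _.
by rewrite mnm3_eq !mnmDE !mnm1E.
Qed.

Lemma mnm3_comp (a b c : 'I_3) i : (U_(a) + U_(b) + U_(c))%MM i = cnt a b c i.
Proof. by rewrite !mnmDE !mnm1E. Qed.
End Gen2.

Definition norm3 (x : 'I_3) : 'I_3 := if val x == 0%N then i1 else if val x == 1%N then i2 else i3.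
Lemma norm3K x : norm3 x = x.
Proof. by case: x => [[|[|[|]]] h] //=; apply/val_inj. Qed.
Section T. Variable C : comNzRingType.
Lemma det33 (A : 'M[C]_3) : \det A =
  A i1 i1 * (A i2 i2 * A i3 i3 - A i2 i3 * A i3 i2)
  - A i1 i2 * (A i2 i1 * A i3 i3 - A i2 i3 * A i3 i1)
  + A i1 i3 * (A i2 i1 * A i3 i2 - A i2 i2 * A i3 i1).
Proof.
rewrite (expand_det_row _ i1) sum3 /cofactor.
have nA : forall x y, A x y = A (norm3 x) (norm3 y) by move=> x y; rewrite !norm3K.
rewrite !(expand_det_row _ ord0) !big_ord_recr !big_ord0 /cofactor !det_mx11 !mxE.
rewrite !(nA (lift _ _) (lift _ _)).
rewrite /norm3 /= !add0n; ring.
Qed.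


Lemma K3_333 (u v w : 'I_3 -> C) :
  K3 u v w (U_(i3) + U_(i3) + U_(i3))%MM = u i3 * v i3 * w i3.
Proof.
rewrite K3E !mnm3_comp !sum3 /=.
by rewrite ?mulr1 ?mulr0 ?addr0 ?add0r.
Qed.

Lemma cM3 (p q r : {mpoly C[3]}) :
  (forall m, mdeg m != 1%N -> p@_m = 0) ->
  (forall m, mdeg m != 1%N -> q@_m = 0) ->
  (forall m, mdeg m != 1%N -> r@_m = 0) ->
  (p * q * r)@_(U_(i3) + U_(i3) + U_(i3))%MM = p@_U_(i3) * q@_U_(i3) * r@_U_(i3).
Proof.
move=> hp hq hr.
have -> : p * q * r = lin (fun k => p@_U_(k)) * lin (fun k => q@_U_(k)) * lin (fun k => r@_U_(k)).
  by rewrite -(lin_repr hp) -(lin_repr hq) -(lin_repr hr).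
by rewrite coefM3 K3_333.
Qed.

Lemma K3_ndeg (u v w : 'I_3 -> C) m : mdeg m != 3%N -> K3 u v w m = 0.
Proof.
move=> hm; apply: big1 => a _; apply: big1 => b _; apply: big1 => c _.
case: eqP => [e|]; last by rewrite mulr0.
by rewrite -e !mdegD !mdeg1 in hm.
Qed.

Lemma mdeg3_cases (P : 'X_{1..3} -> Prop) :
  P (U_(i1) + U_(i1) + U_(i1))%MM -> P (U_(i1) + U_(i1) + U_(i2))%MM ->
  P (U_(i1) + U_(i1) + U_(i3))%MM -> P (U_(i1) + U_(i2) + U_(i2))%MM ->
  P (U_(i1) + U_(i2) + U_(i3))%MM -> P (U_(i1) + U_(i3) + U_(i3))%MM ->
  P (U_(i2) + U_(i2) + U_(i2))%MM -> P (U_(i2) + U_(i2) + U_(i3))%MM ->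
  P (U_(i2) + U_(i3) + U_(i3))%MM -> P (U_(i3) + U_(i3) + U_(i3))%MM ->
  forall m, mdeg m = 3%N -> P m.
Proof.
move=> h111 h112 h113 h122 h123 h133 h222 h223 h233 h333 m.
have e : forall a b c, cnt a b c i1 = m i1 -> cnt a b c i2 = m i2 -> cnt a b c i3 = m i3 ->
   m = (U_(a) + U_(b) + U_(c))%MM.
  by move=> a b c e1 e2 e3; apply/eqP; rewrite mnm3_eq !mnm3_comp e1 e2 e3 !eqxx.
rewrite mdeg3E.
case E1: (m i1) => [|[|[|[|?]]]]; case E2: (m i2) => [|[|[|[|?]]]];
  case E3: (m i3) => [|[|[|[|?]]]] => hm; try discriminate hm;
  first [ by rewrite (e i1 i1 i1) ?E1 ?E2 ?E3
        | by rewrite (e i1 i1 i2) ?E1 ?E2 ?E3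
        | by rewrite (e i1 i1 i3) ?E1 ?E2 ?E3
        | by rewrite (e i1 i2 i2) ?E1 ?E2 ?E3
        | by rewrite (e i1 i2 i3) ?E1 ?E2 ?E3
        | by rewrite (e i1 i3 i3) ?E1 ?E2 ?E3
        | by rewrite (e i2 i2 i2) ?E1 ?E2 ?E3
        | by rewrite (e i2 i2 i3) ?E1 ?E2 ?E3
        | by rewrite (e i2 i3 i3) ?E1 ?E2 ?E3
        | by rewrite (e i3 i3 i3) ?E1 ?E2 ?E3
        ].
Qed.
End T.

Section H. Variable C : numFieldType.
Lemma hG (f : {mpoly C[3]}) x y : f \is 3.-homog -> forall m, mdeg m != 1%N ->
  (mderiv x (mderiv y f))@_m = 0.
Proof.
move=> hf m hm; rewrite !mcoeff_deriv (dhomog_nemf_coeff hf) ?mul0rn //.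
change (mdeg (m + U_(x) + U_(y))%MM != 3%N).
by rewrite !mdegD !mdeg1 addn1 addn1; move: hm; case: (mdeg m) => [|[|]].
Qed.

Lemma hess333 (f : {mpoly C[3]}) : f \is 3.-homog ->
  cf3 f i1 i3 i3 = 0 -> cf3 f i2 i3 i3 = 0 ->
  cf3 (hessian3 f) i3 i3 i3 = 3%:R * cf3 f i3 i3 i3 *
     (4%:R * cf3 f i1 i1 i3 * cf3 f i2 i2 i3 - cf3 f i1 i2 i3 ^+ 2).
Proof.
move=> hf h133 h233; rewrite /cf3 /hessian3 mcoeffZ det33 !mxE.
rewrite !mulrBr !mulrA !(raddfB, raddfD) /=.
rewrite !(cM3 (hG _ _ hf) (hG _ _ hf) (hG _ _ hf)).
rewrite !mcoeff_deriv !mnmDE !mnm1E /=.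
have mE : forall a b c a' b' c' : 'I_3, cnt a b c i1 = cnt a' b' c' i1 ->
    cnt a b c i2 = cnt a' b' c' i2 -> cnt a b c i3 = cnt a' b' c' i3 ->
    (U_(a) + U_(b) + U_(c) = U_(a') + U_(b') + U_(c'))%MM.
  by move=> a b c a' b' c' e1 e2 e3; apply/eqP; rewrite mnm3_eq !mnm3_comp e1 e2 e3 !eqxx.
rewrite (mE i3 i1 i1 i1 i1 i3) // (mE i3 i2 i2 i2 i2 i3) // (mE i3 i2 i3 i2 i3 i3) //.
rewrite (mE i3 i3 i2 i2 i3 i3) // (mE i3 i1 i2 i1 i2 i3) // (mE i3 i2 i1 i1 i2 i3) //.
rewrite (mE i3 i3 i1 i1 i3 i3) // (mE i3 i1 i3 i1 i3 i3) //.
move: h133 h233; rewrite /cf3 => -> ->.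
rewrite /=.
field; by [].
Qed.
End H.

Section Core.
Variable C : numClosedFieldType.

Lemma nat_neq0 n : (n.+1)%:R != 0 :> C.
Proof. by rewrite pnatr_eq0. Qed.

Lemma factor2 (p q r : C) : q ^+ 2 - 4%:R * p * r != 0 ->
  exists u1 u2 v1 v2 : C, [/\ u1 * v1 = p, u1 * v2 + u2 * v1 = q & u2 * v2 = r].
Proof.
move=> hd.
have [->|p0] := eqVneq p 0.
  by exists 0, 1, q, r; split; ring.
set de := sqrtC (q ^+ 2 - 4%:R * p * r).
have hde : de ^+ 2 = q ^+ 2 - 4%:R * p * r by rewrite sqrtCK.
exists p, ((q + de) / 2%:R), 1, ((q - de) / (2%:R * p)); split.
- by rewrite mulr1.
- field; rewrite ?p0 ?nat_neq0 //.
- have -> : (q + de) / 2%:R * ((q - de) / (2%:R * p)) = (q ^+ 2 - de ^+ 2) / (4%:R * p).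
    field; rewrite ?p0 ?nat_neq0 //.
  rewrite hde; field; rewrite ?p0 ?nat_neq0 //.
Qed.
End Core.

Section Core2.
Variable C : numClosedFieldType.

Lemma core (a al be ga c0 c1 c2 c3 : C) : a != 0 ->
  4%:R * al * ga - be ^+ 2 != 0 ->
  al * (4%:R * al * ga - be ^+ 2) + 3%:R * (c1 ^+ 2 - 3%:R * c0 * c2) * a = 0 ->
  be * (4%:R * al * ga - be ^+ 2) + 3%:R * (c1 * c2 - 9%:R * c0 * c3) * a = 0 ->
  ga * (4%:R * al * ga - be ^+ 2) + 3%:R * (c2 ^+ 2 - 3%:R * c1 * c3) * a = 0 ->
  exists U1 U2 V1 V2 : C,
   [/\ al = - 3%:R * a * (U1 * V1), be = - 3%:R * a * (U1 * V2 + U2 * V1),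
       ga = - 3%:R * a * (U2 * V2) & [/\ c0 = a * (U1 ^+ 3 + V1 ^+ 3),
       c1 = 3%:R * a * (U1 ^+ 2 * U2 + V1 ^+ 2 * V2),
       c2 = 3%:R * a * (U1 * U2 ^+ 2 + V1 * V2 ^+ 2) &
       c3 = a * (U2 ^+ 3 + V2 ^+ 3)]].
Proof.
move=> a0 hD h1 h2 h3.
have n3 : 3%:R != 0 :> C by rewrite pnatr_eq0.
have [u1 [u2 [v1 [v2 [e1 e2 e3]]]]] :
    exists u1 u2 v1 v2 : C, [/\ u1 * v1 = - al / (3%:R * a),
      u1 * v2 + u2 * v1 = - be / (3%:R * a) & u2 * v2 = - ga / (3%:R * a)].
  apply: factor2.
  have -> : (- be / (3%:R * a)) ^+ 2 - 4%:R * (- al / (3%:R * a)) * (- ga / (3%:R * a))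
     = - (4%:R * al * ga - be ^+ 2) / (9%:R * a ^+ 2).
    by field; rewrite ?a0 ?n3 ?pnatr_eq0.
  rewrite mulf_eq0 negb_or oppr_eq0 hD /= invr_eq0 mulf_eq0 negb_or expf_eq0 /= a0.
  by rewrite pnatr_eq0.
have eal : al = - 3%:R * a * (u1 * v1) by rewrite e1; field; rewrite ?a0 ?n3 ?pnatr_eq0.
have ebe : be = - 3%:R * a * (u1 * v2 + u2 * v1) by rewrite e2; field; rewrite ?a0 ?n3 ?pnatr_eq0.
have ega : ga = - 3%:R * a * (u2 * v2) by rewrite e3; field; rewrite ?a0 ?n3 ?pnatr_eq0.
clear e1 e2 e3.
set d := u1 * v2 - u2 * v1.
have hDd : 4%:R * al * ga - be ^+ 2 = - 9%:R * a ^+ 2 * d ^+ 2.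
  by rewrite eal ebe ega /d; ring.
have d0 : d != 0.
  by apply: contra hD; rewrite hDd => /eqP ->; rewrite expr0n /= mulr0.
have [A [B [Cc [E [f0 f1 f2 f3]]]]] : exists A B Cc E : C,
  [/\ c0 = a * (A * u1 ^+ 3 + B * u1 ^+ 2 * v1 + Cc * u1 * v1 ^+ 2 + E * v1 ^+ 3),
   c1 = a * (3%:R * A * u1 ^+ 2 * u2 + B * (u1 ^+ 2 * v2 + 2%:R * u1 * u2 * v1)
             + Cc * (u2 * v1 ^+ 2 + 2%:R * u1 * v1 * v2) + 3%:R * E * v1 ^+ 2 * v2),
   c2 = a * (3%:R * A * u1 * u2 ^+ 2 + B * (2%:R * u1 * u2 * v2 + u2 ^+ 2 * v1)
             + Cc * (u1 * v2 ^+ 2 + 2%:R * u2 * v1 * v2) + 3%:R * E * v1 * v2 ^+ 2) &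
   c3 = a * (A * u2 ^+ 3 + B * u2 ^+ 2 * v2 + Cc * u2 * v2 ^+ 2 + E * v2 ^+ 3)].
  exists ((c0 * v2 ^+ 3 - c1 * v2 ^+ 2 * v1 + c2 * v2 * v1 ^+ 2 - c3 * v1 ^+ 3) / (a * d ^+ 3)).
  exists ((- 3%:R * c0 * v2 ^+ 2 * u2 + c1 * (v2 ^+ 2 * u1 + 2%:R * u2 * v1 * v2)
          + c2 * (- u2 * v1 ^+ 2 - 2%:R * u1 * v1 * v2) + 3%:R * c3 * v1 ^+ 2 * u1) / (a * d ^+ 3)).
  exists ((3%:R * c0 * v2 * u2 ^+ 2 + c1 * (- u2 ^+ 2 * v1 - 2%:R * u1 * u2 * v2)
          + c2 * (v2 * u1 ^+ 2 + 2%:R * u1 * u2 * v1) - 3%:R * c3 * v1 * u1 ^+ 2) / (a * d ^+ 3)).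
  exists ((- c0 * u2 ^+ 3 + c1 * u2 ^+ 2 * u1 - c2 * u2 * u1 ^+ 2 + c3 * u1 ^+ 3) / (a * d ^+ 3)).
  move: d0; rewrite /d => d0.
  by split; field; rewrite ?a0 ?d0.
have k0 : 3%:R * a ^+ 3 * d ^+ 4 != 0 by rewrite !mulf_neq0 ?expf_neq0 ?a0 ?d0 ?n3.
have kP : 3%:R * a ^+ 3 * d ^+ 4 * (B ^+ 2 - 3%:R * A * Cc) =
  v2 ^+ 2 * (al * (4%:R * al * ga - be ^+ 2) + 3%:R * (c1 ^+ 2 - 3%:R * c0 * c2) * a)
  - v1 * v2 * (be * (4%:R * al * ga - be ^+ 2) + 3%:R * (c1 * c2 - 9%:R * c0 * c3) * a)
  + v1 ^+ 2 * (ga * (4%:R * al * ga - be ^+ 2) + 3%:R * (c2 ^+ 2 - 3%:R * c1 * c3) * a).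
  by rewrite eal ebe ega f0 f1 f2 f3 /d; ring.
have kS : 3%:R * a ^+ 3 * d ^+ 4 * (Cc ^+ 2 - 3%:R * B * E) =
  u2 ^+ 2 * (al * (4%:R * al * ga - be ^+ 2) + 3%:R * (c1 ^+ 2 - 3%:R * c0 * c2) * a)
  - u1 * u2 * (be * (4%:R * al * ga - be ^+ 2) + 3%:R * (c1 * c2 - 9%:R * c0 * c3) * a)
  + u1 ^+ 2 * (ga * (4%:R * al * ga - be ^+ 2) + 3%:R * (c2 ^+ 2 - 3%:R * c1 * c3) * a).
  by rewrite eal ebe ega f0 f1 f2 f3 /d; ring.
have kQ : 3%:R * a ^+ 3 * d ^+ 4 * (B * Cc - 9%:R * A * E + 9%:R) =
  - 2%:R * u2 * v2 * (al * (4%:R * al * ga - be ^+ 2) + 3%:R * (c1 ^+ 2 - 3%:R * c0 * c2) * a)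
  + (u1 * v2 + u2 * v1) * (be * (4%:R * al * ga - be ^+ 2) + 3%:R * (c1 * c2 - 9%:R * c0 * c3) * a)
  - 2%:R * u1 * v1 * (ga * (4%:R * al * ga - be ^+ 2) + 3%:R * (c2 ^+ 2 - 3%:R * c1 * c3) * a).
  by rewrite eal ebe ega f0 f1 f2 f3 /d; ring.
rewrite h1 h2 h3 !mulr0 ?subr0 ?addr0 in kP kS kQ.
move/eqP: kP; rewrite mulf_eq0 (negbTE k0) /= subr_eq0 => /eqP hP.
move/eqP: kS; rewrite mulf_eq0 (negbTE k0) /= subr_eq0 => /eqP hS.
move/eqP: kQ; rewrite mulf_eq0 (negbTE k0) /= => /eqP hQ.
have hBC : B * Cc = 0.
  have : B * Cc * (B * Cc - 9%:R * A * E) = 0.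
    have -> : B * Cc * (B * Cc - 9%:R * A * E) =
       Cc ^+ 2 * (B ^+ 2 - 3%:R * A * Cc) + 3%:R * A * Cc * (Cc ^+ 2 - 3%:R * B * E) by ring.
    by rewrite hP hS !subrr !mulr0 addr0.
  have -> : B * Cc - 9%:R * A * E = -9%:R by apply/eqP; rewrite -subr_eq0 -hQ; apply/eqP; ring.
  by move/eqP; rewrite mulf_eq0 oppr_eq0 pnatr_eq0 orbF => /eqP.
have [B0 C0] : B = 0 /\ Cc = 0.
  move/eqP: hBC; rewrite mulf_eq0 => /orP [/eqP B0|/eqP C0].
    split => //; move: hS; rewrite B0 mulr0 mul0r => /eqP.
    by rewrite expf_eq0 /= => /eqP.
  split => //; move: hP; rewrite C0 mulr0 => /eqP.
  by rewrite expf_eq0 /= => /eqP.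
subst B Cc.
have AE : A * E = 1.
  have : 9%:R * (1 - A * E) = 0 by rewrite -hQ; ring.
  move/eqP; rewrite mulf_eq0 pnatr_eq0 /= subr_eq0 => /eqP.
  by move=> ->.
have A0 : A != 0 by apply: contra_eq_neq AE => ->; rewrite mul0r eq_sym oner_eq0.
set t := 3.-root A.
have ht : t ^+ 3 = A by rewrite /t rootCK.
have t0 : t != 0 by rewrite /t rootC_eq0.
have hE : E = (t ^+ 3)^-1 by rewrite ht -{1}(mulKf A0 E) AE mulr1.
exists (t * u1), (t * u2), (v1 / t), (v2 / t).
rewrite f0 f1 f2 f3 hE -ht eal ebe ega.
by split; [field|field|field|split; field].
Qed.
End Core2.

Section Fwd.
Variable C : fieldType.
Lemma fwd (u v w : 'I_3 -> C) :
  let k i j l := K3 u v w (U_(i) + U_(j) + U_(l))%MM in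
  k i3 i3 i3 != 0 -> k i1 i3 i3 = 0 -> k i2 i3 i3 = 0 ->
  [/\ k i1 i1 i3 * (4%:R * k i1 i1 i3 * k i2 i2 i3 - k i1 i2 i3 ^+ 2)
        + 3%:R * (k i1 i1 i2 ^+ 2 - 3%:R * k i1 i1 i1 * k i1 i2 i2)
          * k i3 i3 i3 = 0,
      k i1 i2 i3 * (4%:R * k i1 i1 i3 * k i2 i2 i3 - k i1 i2 i3 ^+ 2)
        + 3%:R * (k i1 i1 i2 * k i1 i2 i2 - 9%:R * k i1 i1 i1 * k i2 i2 i2)
          * k i3 i3 i3 = 0 &
      k i2 i2 i3 * (4%:R * k i1 i1 i3 * k i2 i2 i3 - k i1 i2 i3 ^+ 2)
        + 3%:R * (k i1 i2 i2 ^+ 2 - 3%:R * k i1 i1 i2 * k i2 i2 i2)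
          * k i3 i3 i3 = 0].
Proof.
move=> k; rewrite /k !K3E !mnm3_comp !sum3 /=.
rewrite ?mulr1 ?mulr0 ?addr0 ?add0r.
move: (u i1) (u i2) (u i3) (v i1) (v i2) (v i3) (w i1) (w i2) (w i3).
move=> u1 u2 u3 v1 v2 v3 w1 w2 w3 h0 h1 h2.
have u30 : u3 != 0 by apply: contraNneq h0 => ->; rewrite !mul0r.
have v30 : v3 != 0 by apply: contraNneq h0 => ->; rewrite mulr0 mul0r.
have w30 : w3 != 0 by apply: contraNneq h0 => ->; rewrite mulr0.
have [a1 ea1] : exists a1, u1 = a1 * u3 by exists (u1 / u3); rewrite mulfVK.
have [b1 eb1] : exists b1, u2 = b1 * u3 by exists (u2 / u3); rewrite mulfVK.
have [a2 ea2] : exists a2, v1 = a2 * v3 by exists (v1 / v3); rewrite mulfVK.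
have [b2 eb2] : exists b2, v2 = b2 * v3 by exists (v2 / v3); rewrite mulfVK.
have [a3 ea3] : exists a3, w1 = a3 * w3 by exists (w1 / w3); rewrite mulfVK.
have [b3 eb3] : exists b3, w2 = b3 * w3 by exists (w2 / w3); rewrite mulfVK.
subst u1 u2 v1 v2 w1 w2.
have n0 : u3 * v3 * w3 != 0 by rewrite !mulf_neq0.
have : u3 * v3 * w3 * (a1 + a2 + a3) = 0 by rewrite -h1; ring.
move/eqP; rewrite mulf_eq0 (negbTE n0) /= => /eqP sa.
have : u3 * v3 * w3 * (b1 + b2 + b3) = 0 by rewrite -h2; ring.
move/eqP; rewrite mulf_eq0 (negbTE n0) /= => /eqP sb.
have e3 : a3 = - a1 - a2 by apply/eqP; rewrite -subr_eq0 -sa; apply/eqP; ring.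
have f3 : b3 = - b1 - b2 by apply/eqP; rewrite -subr_eq0 -sb; apply/eqP; ring.
subst a3 b3.
by split; ring.
Qed.
End Fwd.

Section Bwd.
Variable C : comNzRingType.
Lemma lin_homog (u : 'I_3 -> C) : lin u \is 1.-homog.
Proof.
rewrite /lin; apply: rpred_sum => j _; apply: rpredZ.
by rewrite dhomogX /= mdeg1.
Qed.

Lemma K3split (u m n : 'I_3 -> C) s M :
  K3 u (fun j => m j + s * n j) (fun j => m j - s * n j) M =
  K3 u m m M - s ^+ 2 * K3 u n n M.
Proof.
have [/eqP hM|hM] := boolP (mdeg M == 3%N); last by rewrite !K3_ndeg // mulr0 subr0.
move: M hM; apply: mdeg3_cases; rewrite !K3E !mnm3_comp !sum3 /=;
  rewrite ?mulr1 ?mulr0 ?addr0 ?add0r; ring.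
Qed.
End Bwd.

Definition mk3 (T : Type) (x y z : T) (j : 'I_3) : T :=
  if val j == 0%N then x else if val j == 1%N then y else z.

Section Bwd2.
Variable C : numClosedFieldType.
Lemma bwd (f : {mpoly C[3]}) : f \is 3.-homog -> cf3 f i3 i3 i3 != 0 ->
  4%:R * cf3 f i1 i1 i3 * cf3 f i2 i2 i3 - cf3 f i1 i2 i3 ^+ 2 != 0 ->
  cf3 f i1 i3 i3 = 0 -> cf3 f i2 i3 i3 = 0 ->
  cf3 f i1 i1 i3 * (4%:R * cf3 f i1 i1 i3 * cf3 f i2 i2 i3 - cf3 f i1 i2 i3 ^+ 2)
        + 3%:R * (cf3 f i1 i1 i2 ^+ 2 - 3%:R * cf3 f i1 i1 i1 * cf3 f i1 i2 i2)
          * cf3 f i3 i3 i3 = 0 ->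
  cf3 f i1 i2 i3 * (4%:R * cf3 f i1 i1 i3 * cf3 f i2 i2 i3 - cf3 f i1 i2 i3 ^+ 2)
        + 3%:R * (cf3 f i1 i1 i2 * cf3 f i1 i2 i2 - 9%:R * cf3 f i1 i1 i1 * cf3 f i2 i2 i2)
          * cf3 f i3 i3 i3 = 0 ->
  cf3 f i2 i2 i3 * (4%:R * cf3 f i1 i1 i3 * cf3 f i2 i2 i3 - cf3 f i1 i2 i3 ^+ 2)
        + 3%:R * (cf3 f i1 i2 i2 ^+ 2 - 3%:R * cf3 f i1 i1 i2 * cf3 f i2 i2 i2)
          * cf3 f i3 i3 i3 = 0 ->
  completely_reducible f.
Proof.
move=> hf a0 hD h133 h233 h1 h2 h3.
have [U1 [U2 [V1 [V2 [eal ebe ega [e0 e1 e2 e3]]]]]] := core a0 hD h1 h2 h3.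
set a := cf3 f i3 i3 i3 in eal ebe ega e0 e1 e2 e3.
set s := sqrtC (-3 : C).
have hs : s ^+ 2 = -3 by rewrite sqrtCK.
pose u := mk3 (a * (U1 + V1)) (a * (U2 + V2)) a.
pose m := mk3 (- (U1 + V1) / 2%:R) (- (U2 + V2) / 2%:R) 1.
pose n := mk3 ((U1 - V1) / 2%:R) ((U2 - V2) / 2%:R) 0.
exists (lin u), (lin (fun j => m j + s * n j)), (lin (fun j => m j - s * n j)).
split; try exact: lin_homog.
apply/mpolyP => M; rewrite coefM3 K3split hs.
have [/eqP hM|hM] := boolP (mdeg M == 3%N); last first.
  by rewrite !K3_ndeg // (dhomog_nemf_coeff hf) ?mulr0 ?subr0.
have n2 : 2%:R != 0 :> C by rewrite pnatr_eq0.
move: M hM; apply: mdeg3_cases; rewrite !K3E !mnm3_comp !sum3 /=;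
  rewrite ?mulr1 ?mulr0 ?addr0 ?add0r;
  rewrite -?[f@_(_)]/(cf3 f _ _ _) -/a ?eal ?ebe ?ega ?e0 ?e1 ?e2 ?e3 ?h133 ?h233 /u /m /n /mk3 /=;
  by field.
Qed.
End Bwd2.

Lemma homog1_coef (C : comNzRingType) (p : {mpoly C[3]}) :
  p \is 1.-homog -> forall m, mdeg m != 1%N -> p@_m = 0.
Proof. by move=> hp m hm; apply: (dhomog_nemf_coeff hp). Qed.

End Helpers.
Import Helpers.

Theorem lemma10p2 (R : realType) (f : {mpoly R[i][3]}) :
  ternary_cubic_form f ->
  cf3 f i3 i3 i3 != 0 ->
  cf3 (hessian3 f) i3 i3 i3 != 0 ->
  cf3 f i1 i3 i3 = 0 -> cf3 f i2 i3 i3 = 0 ->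
  completely_reducible f <->
  [/\ cf3 f i1 i1 i3 * (4%:R * cf3 f i1 i1 i3 * cf3 f i2 i2 i3 - cf3 f i1 i2 i3 ^+ 2)
        + 3%:R * (cf3 f i1 i1 i2 ^+ 2 - 3%:R * cf3 f i1 i1 i1 * cf3 f i1 i2 i2)
          * cf3 f i3 i3 i3 = 0,
      cf3 f i1 i2 i3 * (4%:R * cf3 f i1 i1 i3 * cf3 f i2 i2 i3 - cf3 f i1 i2 i3 ^+ 2)
        + 3%:R * (cf3 f i1 i1 i2 * cf3 f i1 i2 i2 - 9%:R * cf3 f i1 i1 i1 * cf3 f i2 i2 i2)
          * cf3 f i3 i3 i3 = 0 &
      cf3 f i2 i2 i3 * (4%:R * cf3 f i1 i1 i3 * cf3 f i2 i2 i3 - cf3 f i1 i2 i3 ^+ 2)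
        + 3%:R * (cf3 f i1 i2 i2 ^+ 2 - 3%:R * cf3 f i1 i1 i2 * cf3 f i2 i2 i2)
          * cf3 f i3 i3 i3 = 0].
Proof.
rewrite /ternary_cubic_form => hf h333 hH h133 h233; split.
  case=> l1 [l2 [l3 [hl1 hl2 hl3 ef]]].
  have r1 := lin_repr (homog1_coef hl1).
  have r2 := lin_repr (homog1_coef hl2).
  have r3 := lin_repr (homog1_coef hl3).
  have ef' : f = lin (fun k => l1@_U_(k)) * lin (fun k => l2@_U_(k)) * lin (fun k => l3@_U_(k)).
    by rewrite -r1 -r2 -r3.
  move: h333 h133 h233; rewrite /cf3 ef' !coefM3.
  move=> a b c.
  have H := @fwd R[i] (fun k => l1@_U_(k)) (fun k => l2@_U_(k)) (fun k => l3@_U_(k)).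
  have := H a b c.
  exact.
case=> h1 h2 h3.
have hD : 4%:R * cf3 f i1 i1 i3 * cf3 f i2 i2 i3 - cf3 f i1 i2 i3 ^+ 2 != 0.
  move: hH; rewrite (hess333 hf h133 h233) !mulf_eq0 !negb_or => /andP [_ hD0]; exact: hD0.
exact: (bwd hf h333 hD h133 h233 h1 h2 h3).
Qed.
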